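(* Let $J\ge2$, positive integers $n_1,\dots,n_J$ with $n_l\ge 2$ and $n=\sum_l n_l$, and for each $b\ge1$ let $\tilde h_b(l,l')$, $1\le l,l'\le J$, be the quantities defined below. If $1\le j\ne j'\le J$ and $\liminf_{b\to\infty}\tilde\xi_b(j,j')>0$, then $\liminf_{b\to\infty}\tilde\tau_b(j,j')>0$.
   Context: For each $b$, there are probability distributions $\mathbf F_1,\dots,\mathbf F_J$ on $\mathbb R^d$ with a partition of the coordinates into clusters $C_1,\dots,C_b$ of sizes $d_1,\dots,d_b$; $\gamma,\phi:\mathbb R^+\to\mathbb R^+$ continuous increasing with $\gamma(0)=\phi(0)=0$. For independent $\mathbf U\sim\mathbf F_l$, $\mathbf V\sim\mathbf F_{l'}$ with sub-vectors $\mathbf U_i,\mathbf V_i$ on $C_i$, $\tilde h_b(l,l')=\phi\big[b^{-1}\sum_{i=1}^b\mathrm E\gamma(d_i^{-1}\|\mathbf U_i-\mathbf V_i\|^2)\big]$ (assumed finite); note $\tilde h_b(l,l')=\tilde h_b(l',l)$. $\tilde\xi_b(j,j')=\tilde h_b(j,j')-\frac12[\tilde h_b(j,j)+\tilde h_b(j',j')]$ and $\tilde\tau_b(j,j')=\sum_{1\le l\ne j'\le J}\frac{n_l}{n-1}|\tilde h_b(j',l)-\tilde h_b(j,l)|+\frac{n_{j'}-1}{n-1}|\tilde h_b(j',j')-\tilde h_b(j,j')|$. *)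

(* Defs.v *)
From HB Require Import structures.
From mathcomp Require Import all_boot all_order all_algebra.
From mathcomp Require Import all_classical all_reals all_analysis.
Set Implicit Arguments. Unset Strict Implicit. Unset Printing Implicit Defensive.
Import Order.TTheory GRing.Theory Num.Theory numFieldNormedType.Exports.
Local Open Scope ring_scope.

(* R^d is modelled as d.-tuple R with its product (Borel) sigma-algebra.
   A partition of the d coordinates into b clusters C_1..C_b is given by a
   cluster-assignment map  c : 'I_d -> 'I_b  (coordinate k lies in C_{c k}). *)

Section Defs.
Variable R : realType.

Definition csize (d b : nat) (c : 'I_d -> 'I_b) (i : 'I_b) : nat :=
  #|[set k : 'I_d | c k == i]|.

Definition cl_sqdist (d b : nat) (c : 'I_d -> 'I_b) (i : 'I_b)
  (u v : d.-tuple R) : R :=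
  \sum_(k < d | c k == i) (tnth u k - tnth v k) ^+ 2.

(* E gamma(d_i^{-1} ||U_i - V_i||^2) for independent U ~ P, V ~ Q, i.e. the
   integral against the product measure P \x Q. *)
Definition Egam (d b : nat) (c : 'I_d -> 'I_b) (gamma : R -> R)
  (P Q : probability (d.-tuple R) R) (i : 'I_b) : \bar R :=
  (\int[(P \x Q)%E]_uv (gamma (cl_sqdist c i uv.1 uv.2 / (csize c i)%:R))%:E)%E.

Definition htilde (d b : nat) (c : 'I_d -> 'I_b) (gamma phi : R -> R)
  (P Q : probability (d.-tuple R) R) : R :=
  phi (b%:R^-1 * \sum_(i < b) fine (Egam c gamma P Q i)).

Definition xitilde (J : nat) (h : 'I_J -> 'I_J -> R) (j j' : 'I_J) : R :=
  h j j' - 2^-1 * (h j j + h j' j').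

Definition tautilde (J : nat) (n : 'I_J -> nat) (h : 'I_J -> 'I_J -> R)
  (j j' : 'I_J) : R :=
  let N := (\sum_(l < J) n l)%N in
  \sum_(l < J | l != j') ((n l)%:R / (N%:R - 1)) * `|h j' l - h j l|
  + (((n j')%:R - 1) / (N%:R - 1)) * `|h j' j' - h j j'|.

End Defs.

(* Main.v *)
Require Import Defs.
From HB Require Import structures.
From mathcomp Require Import all_boot all_order all_algebra.
From mathcomp Require Import all_classical all_reals all_analysis.
From mathcomp Require Import measurable_realfun lra.
Import Order.TTheory GRing.Theory Num.Theory numFieldNormedType.Exports.
Local Open Scope classical_set_scope.
Local Open Scope ring_scope.
Lemma liminf_pos (R : realType) (u v : nat -> \bar R) (k : R) :
  0 < k -> (forall b, (k%:E * u b <= v b)%E) ->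
  (0 < limn_einf u)%E -> (0 < limn_einf v)%E.
Proof.
move=> k0 uv.
rewrite !limn_einf_lim (cvg_lim _ (@cvg_einfs_sup _ u)) // (cvg_lim _ (@cvg_einfs_sup _ v)) //.
move=> /ereal_sup_gt [_ [n _ <-] un].
apply: (@lt_le_trans _ _ (k%:E * einfs u n)%E).
  by apply: mule_gt0 => //; rewrite lte_fin.
apply: (@le_trans _ _ (einfs v n)); last by apply: ereal_sup_ubound; exists n.
apply/ereal_infP => _ [m /= nm <-].
apply: le_trans (uv m).
apply: lee_wpmul2l; first by rewrite lee_fin ltW.
by apply: ereal_inf_lbound; exists m.
Qed.
Lemma cl_sqdistC (R : realType) d b (c : 'I_d -> 'I_b) i (u v : d.-tuple R) :
  cl_sqdist c i u v = cl_sqdist c i v u.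
Proof.
by apply: eq_bigr => k _; rewrite -sqrrN opprB.
Qed.

Lemma cl_sqdist_ge0 (R : realType) d b (c : 'I_d -> 'I_b) i (u v : d.-tuple R) :
  0 <= cl_sqdist c i u v.
Proof. by apply: sumr_ge0 => k _; apply: sqr_ge0. Qed.

Lemma meas_integrand (R : realType) d b (c : 'I_d -> 'I_b) (gamma : R -> R) i :
  {within [set x : R | 0 <= x], continuous gamma} ->
  measurable_fun [set: (d.-tuple R * d.-tuple R)%type] (fun uv : (d.-tuple R * d.-tuple R)%type =>
    (gamma (cl_sqdist c i uv.1 uv.2 / (csize c i)%:R))%:E).
Proof.
move=> gc; apply/measurable_EFinP.
have mg : measurable_fun [set x : R | 0 <= x] gamma.
  apply: subspace_continuous_measurable_fun => //.
  rewrite (_ : [set x : R | 0 <= x] = `[0, +oo[%classic); last first.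
    by apply/seteqP; split => x /=; rewrite in_itv /= andbT.
  exact: measurable_itv.
apply: (measurable_comp _ _ mg) => //.
- rewrite (_ : [set x : R | 0 <= x] = `[0, +oo[%classic); last first.
    by apply/seteqP; split => x /=; rewrite in_itv /= andbT.
  exact: measurable_itv.
- move=> _ [uv _ <-] /=; apply: divr_ge0; first exact: cl_sqdist_ge0.
  exact: ler0n.
apply: measurable_funM => //.
rewrite /cl_sqdist.
under eq_fun do rewrite big_mkcond /=.
apply: measurable_sum => k.
case: (c k == i); last exact: measurable_cst.
apply: measurable_funX; apply: measurable_funB.
- exact: (measurableT_comp (measurable_tnth k) measurable_fst).
- exact: (measurableT_comp (measurable_tnth k) measurable_snd).
Qed.

Lemma EgamC (R : realType) d b (c : 'I_d -> 'I_b) (gamma : R -> R)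
  (P Q : probability (d.-tuple R) R) i :
  (forall x, 0 <= x -> 0 <= gamma x) ->
  {within [set x : R | 0 <= x], continuous gamma} ->
  Egam c gamma P Q i = Egam c gamma Q P i.
Proof.
move=> g0 gc; rewrite /Egam.
have f0 : forall uv : d.-tuple R * d.-tuple R,
  (0 <= (gamma (cl_sqdist c i uv.1 uv.2 / (csize c i)%:R))%:E)%E.
  move=> uv; rewrite lee_fin; apply: g0; apply: divr_ge0;
    [exact: cl_sqdist_ge0 | exact: ler0n].
rewrite (fubini_tonelli1 _ (@meas_integrand R d b c gamma i gc) f0).
rewrite (fubini_tonelli2 _ (@meas_integrand R d b c gamma i gc) f0).
rewrite /fubini_F /fubini_G /=.
apply: eq_integral => x _; apply: eq_integral => y _.
by rewrite cl_sqdistC.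
Qed.
Lemma key (R : realType) J (n : 'I_J -> nat) (h : 'I_J -> 'I_J -> R) j j' :
  j != j' -> (forall l, 2 <= n l)%N -> h j' j = h j j' ->
  2 / ((\sum_(l < J) n l)%N%:R - 1) * xitilde h j j' <= tautilde n h j j'.
Proof.
move=> jj' n2 hs.
rewrite /tautilde /xitilde /=.
set N := (\sum_(l < J) n l)%N.
have NJ : (n j <= N)%N.
  by rewrite /N (bigD1 j) //= leq_addr.
have N1 : 1 < (N%:R : R).
  by rewrite ltr1n; apply: leq_trans (n2 j) NJ.
rewrite (bigD1 j) //=.
set S := \sum_(l < J | _) _.
have S0 : 0 <= S.
  apply: sumr_ge0 => l _; apply: mulr_ge0; last exact: normr_ge0.
  by apply: divr_ge0 => //; rewrite subr_ge0 ltW.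
idtac.
set w := (N%:R - 1)^-1.
have w0 : 0 < w by rewrite invr_gt0 subr_gt0.
set a := `|h j' j - h j j|.
set b := `|h j' j' - h j j'|.
have ha : h j j' - h j j <= a by rewrite /a hs ler_norm.
have hb : h j j' - h j' j' <= b by rewrite /b -normrN opprB ler_norm.
have nj : 1 <= (n j)%:R :> R by rewrite ler1n; apply: leq_trans (n2 j).
have nj' : 1 <= (n j')%:R - 1 :> R.
  by have := n2 j'; rewrite -(ler_nat R) => H; lra.
have a0 : 0 <= a by apply: normr_ge0.
have b0 : 0 <= b by apply: normr_ge0.
have e1 : w * (h j j' - h j j) <= w * (n j)%:R * a.
  rewrite -[w * _ * _]mulrA ler_pM2l //.
  apply: le_trans ha _; rewrite -[X in X <= _]mul1r; exact: ler_wpM2r.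
have e2 : w * (h j j' - h j' j') <= w * ((n j')%:R - 1) * b.
  rewrite -[w * _ * _]mulrA ler_pM2l //.
  apply: le_trans hb _; rewrite -[X in X <= _]mul1r; exact: ler_wpM2r.
rewrite /w in e1 e2 *. lra.
Qed.
Theorem lemmaA1 (R : realType) (J : nat) (n : 'I_J -> nat)
  (gamma phi : R -> R)
  (d : nat -> nat) (c : forall b : nat, 'I_(d b) -> 'I_b)
  (F : forall b : nat, 'I_J -> probability ((d b).-tuple R) R)
  (j j' : 'I_J) :
  (2 <= J)%N ->
  (forall l, 2 <= n l)%N ->
  (* gamma, phi : R^+ -> R^+ continuous, increasing, vanishing at 0 *)
  (forall x, 0 <= x -> 0 <= gamma x) ->
  (forall x, 0 <= x -> 0 <= phi x) ->
  {within [set x : R | 0 <= x], continuous gamma} ->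
  {within [set x : R | 0 <= x], continuous phi} ->
  (forall x y, 0 <= x -> x < y -> gamma x < gamma y) ->
  (forall x y, 0 <= x -> x < y -> phi x < phi y) ->
  gamma 0 = 0 -> phi 0 = 0 ->
  (* clusters C_1..C_b are nonempty (d_i >= 1) *)
  (forall b (i : 'I_b), (0 < csize (c b) i)%N) ->
  (* the expectations are finite *)
  (forall b (l l' : 'I_J) (i : 'I_b),
      Egam (c b) gamma (F b l) (F b l') i \is a fin_num) ->
  j != j' ->
  (0 < limn_einf (fun b =>
     (xitilde (fun l l' => htilde (c b) gamma phi (F b l) (F b l')) j j')%:E))%E ->
  (0 < limn_einf (fun b =>
     (tautilde n (fun l l' => htilde (c b) gamma phi (F b l) (F b l')) j j')%:E))%E.
Proof.
move=> J2 n2 g0 p0 gc pc _ _ _ _ _ _ jj' Hxi.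
apply: (@liminf_pos R _ _ (2 / ((\sum_(l < J) n l)%N%:R - 1))) Hxi.
- have NJ : (n j <= \sum_(l < J) n l)%N by rewrite (bigD1 j) //= leq_addr.
  have N1 : 1 < ((\sum_(l < J) n l)%N%:R : R).
    by rewrite ltr1n; apply: leq_trans (n2 j) NJ.
  by apply: divr_gt0 => //; rewrite subr_gt0.
- move=> b /=; rewrite -EFinM lee_fin; apply: key => //.
  rewrite /htilde; congr phi; congr (_ * _); apply: eq_bigr => i _.
  by rewrite EgamC.
Qed.
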